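(* Let $\mathbf A$ be a super-paraorthomodular lattice. Then for all $x,y\in A$, if $x\leq y$ then $y\land(y'\lor(x\land x'))=(y\land y')\lor(x\land x')$.
   Context: A pseudo-Kleene lattice is an algebra $(A,\land,\lor,{}',0,1)$ that is a bounded lattice with an antitone involution ${}'$ ($x\leq y\Rightarrow y'\leq x'$, $x''=x$) satisfying $x\land x'\leq y\lor y'$. It is super-paraorthomodular if for all $x,y$: (SP1) $x\leq y$ and $x'\land y=(x\land x')\lor(y\land y')$ imply $y\land(x\lor x')=x\lor(y\land y')$; (SP2) $x\leq y$ implies $(x\land x')\lor(y\land y')=(x'\land y)\land(x'\land y)'$. *)

(* Defs.v *)
From mathcomp Require Import all_boot all_order.
Set Implicit Arguments. Unset Strict Implicit. Unset Printing Implicit Defensive.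
Import Order.TTheory.
Local Open Scope order_scope.

(* A pseudo-Kleene lattice: a bounded lattice (carrier T : tbLatticeType,
   meet `&`, join `|`, bottom \bot = 0, top \top = 1) together with an
   operation c (written x' in the paper) that is an antitone involution
   satisfying x /\ x' <= y \/ y'. *)
Definition pseudo_kleene (disp : Order.disp_t) (T : tbLatticeType disp)
  (c : T -> T) : Prop :=
  (forall x y : T, x <= y -> c y <= c x) /\
  (forall x : T, c (c x) = x) /\
  (forall x y : T, x `&` c x <= y `|` c y).

Definition super_paraorthomodular (disp : Order.disp_t) (T : tbLatticeType disp)
  (c : T -> T) : Prop :=
  pseudo_kleene c /\
  (forall x y : T, x <= y ->
     c x `&` y = (x `&` c x) `|` (y `&` c y) ->
     y `&` (x `|` c x) = x `|` (y `&` c y)) /\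
  (forall x y : T, x <= y ->
     (x `&` c x) `|` (y `&` c y) = (c x `&` y) `&` c (c x `&` y)).

(* Main.v *)
Require Import Defs.
From mathcomp Require Import all_boot all_order.
Import Order.TTheory.
Local Open Scope order_scope.

Theorem lemma3p3 (disp : Order.disp_t) (T : tbLatticeType disp) (c : T -> T)
  (HA : super_paraorthomodular c) (x y : T) :
  x <= y -> y `&` (c y `|` (x `&` c x)) = (y `&` c y) `|` (x `&` c x).
Proof.
move=> xy.
case: HA => [[anti [inv _]] [_ SP2]].
have ax : x `&` c x <= x by apply: leIl.
have axc : x `&` c x <= c x by apply: leIr.
have cyx : c y <= c x by apply: anti.
apply: le_anti; apply/andP; split; last first.
  rewrite leUx; apply/andP; split; rewrite lexI; apply/andP; split.
  - exact: leIl.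
  - exact: le_trans (leIr _ _) (leUl _ _).
  - exact: le_trans ax xy.
  - exact: leUr.
have E := SP2 x y xy; rewrite joinC in E; rewrite E.
have hy : c x `&` y <= c x by apply: leIl.
have hy2 : c x `&` y <= y by apply: leIr.
have h1 : x <= c (c x `&` y) by rewrite -{1}(inv x); apply: anti.
have h2 : c y <= c (c x `&` y) by apply: anti.
rewrite !lexI; apply/andP; split; [apply/andP; split|].
- apply: le_trans (leIr _ _) _; rewrite leUx cyx /=; exact: axc.
- exact: leIl.
- apply: le_trans (leIr _ _) _; rewrite leUx h2 /=; exact: le_trans ax h1.
Qed.
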